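(* Let $X$, $X_m$, $P_m$, $J_m$ satisfy the approximation properties in the context. Let $A$ generate a strongly continuous semigroup $(T(t))_{t\ge0}$ on $X$ and let $A_m$ generate strongly continuous semigroups $(T_m(t))_{t\ge0}$ on $X_m$, with constants $M_T\ge1$, $\omega_T\in\mathbb{R}$ such that $\|T(h)\|\le M_Te^{\omega_Th}$ and $\|T_m(h)\|\le M_Te^{\omega_Th}$ for all $h>0$, $m\in\mathbb{N}$, and assume $\lim_{m\to\infty}J_mA_mP_mx=Ax$ for all $x\in D(A)$ (in particular $P_mx\in D(A_m)$ for such $x$). Fix $t_0>0$. Then for all $t\in(0,t_0]$, $$\lim_{n,m\to\infty}\frac{J_mT_m(t/n)P_mx-J_mP_mx}{t/n}=Ax\quad\text{for all }x\in D(A),$$ where the limit as $m\to\infty$ is uniform in $n\in\mathbb{N}$.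
   Context: Approximation properties: $X_m$ ($m\in\mathbb{N}$) are Banach spaces and $P_m:X\to X_m$, $J_m:X_m\to X$ are bounded linear operators such that (i) $P_mJ_m=I_m$ (the identity on $X_m$) for all $m$; (ii) $\lim_{m\to\infty}J_mP_mx=x$ for all $x\in X$; (iii) $\|J_m\|\le M_J$, $\|P_m\|\le M_P$ for all $m$, for some constants $M_J,M_P>0$. A double limit $\lim_{n,m\to\infty}a_{n,m}=a$ means: for every $\varepsilon>0$ there is $N$ with $\|a_{n,m}-a\|\le\varepsilon$ for all $n,m\ge N$. *)

(* Defs.v *)
From Stdlib Require Import Reals.
Open Scope R_scope.

Record Banach := MkBanach {
  car :> Type;
  vzero : car;
  vadd : car -> car -> car;
  vopp : car -> car;
  vscal : R -> car -> car;
  vnorm : car -> R;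
  vadd_assoc : forall x y z, vadd x (vadd y z) = vadd (vadd x y) z;
  vadd_comm : forall x y, vadd x y = vadd y x;
  vadd_0 : forall x, vadd x vzero = x;
  vadd_opp : forall x, vadd x (vopp x) = vzero;
  vscal_1 : forall x, vscal 1 x = x;
  vscal_assoc : forall a b x, vscal a (vscal b x) = vscal (a * b) x;
  vscal_distr_v : forall a x y, vscal a (vadd x y) = vadd (vscal a x) (vscal a y);
  vscal_distr_s : forall a b x, vscal (a + b) x = vadd (vscal a x) (vscal b x);
  vnorm_eq0 : forall x, vnorm x = 0 -> x = vzero;
  vnorm_scal : forall a x, vnorm (vscal a x) = Rabs a * vnorm x;
  vnorm_triangle : forall x y, vnorm (vadd x y) <= vnorm x + vnorm y;
  vcomplete : forall u : nat -> car,
    (forall eps, 0 < eps -> exists N, forall p q, (N <= p)%nat -> (N <= q)%nat ->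
        vnorm (vadd (u p) (vopp (u q))) < eps) ->
    exists l, forall eps, 0 < eps -> exists N, forall n, (N <= n)%nat ->
        vnorm (vadd (u n) (vopp l)) < eps
}.

Arguments vzero {b0}.
Arguments vadd {b0}.
Arguments vopp {b0}.
Arguments vscal {b0}.
Arguments vnorm {b0}.

Definition vsub {X : Banach} (x y : X) : X := vadd x (vopp y).

Definition seq_lim {X : Banach} (u : nat -> X) (l : X) : Prop :=
  forall eps, 0 < eps -> exists N, forall n, (N <= n)%nat -> vnorm (vsub (u n) l) <= eps.

Definition rlim0 {X : Banach} (f : R -> X) (l : X) : Prop :=
  forall eps, 0 < eps -> exists delta, 0 < delta /\
    forall h, 0 < h < delta -> vnorm (vsub (f h) l) <= eps.

Definition bdd_linear {X Y : Banach} (f : X -> Y) : Prop :=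
  (forall x y, f (vadd x y) = vadd (f x) (f y)) /\
  (forall a x, f (vscal a x) = vscal a (f x)) /\
  (exists C, forall x, vnorm (f x) <= C * vnorm x).

Definition op_norm_le {X Y : Banach} (f : X -> Y) (M : R) : Prop :=
  forall x, vnorm (f x) <= M * vnorm x.

(* Strongly continuous (C0) semigroup (T(t))_{t>=0}; T is only used at t >= 0. *)
Definition C0_semigroup {X : Banach} (T : R -> X -> X) : Prop :=
  (forall t, 0 <= t -> bdd_linear (T t)) /\
  (forall x, T 0 x = x) /\
  (forall t s x, 0 <= t -> 0 <= s -> T (t + s) x = T t (T s x)) /\
  (forall x t, 0 <= t -> forall eps, 0 < eps -> exists delta, 0 < delta /\
     forall s, 0 <= s -> Rabs (s - t) < delta -> vnorm (vsub (T s x) (T t x)) <= eps).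

Definition generator {X : Banach} (T : R -> X -> X) (D : X -> Prop) (A : X -> X) : Prop :=
  forall x,
    (D x <-> exists y, rlim0 (fun h => vscal (/ h) (vsub (T h x) x)) y) /\
    (D x -> rlim0 (fun h => vscal (/ h) (vsub (T h x) x)) (A x)).

(* Main.v *)
Require Import Defs.
From Stdlib Require Import Reals Lra Lia Classical.
Open Scope R_scope.

Lemma vadd_0l (X : Banach) (x : X) : vadd vzero x = x.
Proof. rewrite vadd_comm; apply vadd_0. Qed.

Lemma vopp_l (X : Banach) (x : X) : vadd (vopp x) x = vzero.
Proof. rewrite vadd_comm; apply vadd_opp. Qed.

Lemma vadd_cancel (X : Banach) (x y z : X) : vadd x y = vadd x z -> y = z.
Proof.
  intro H. rewrite <- (vadd_0l X y), <- (vadd_0l X z), <- (vopp_l X x).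
  rewrite <- !vadd_assoc, H. reflexivity.
Qed.

Lemma vscal_0 (X : Banach) (x : X) : vscal 0 x = vzero.
Proof.
  apply (vadd_cancel X (vscal 0 x)). rewrite vadd_0, <- vscal_distr_s.
  now rewrite Rplus_0_l.
Qed.

Lemma vopp_unique (X : Banach) (x y : X) : vadd x y = vzero -> y = vopp x.
Proof. intro H. apply (vadd_cancel X x). now rewrite H, vadd_opp. Qed.

Lemma vopp_scal (X : Banach) (x : X) : vopp x = vscal (-1) x.
Proof.
  symmetry; apply vopp_unique.
  rewrite <- (vscal_1 X x) at 1. rewrite <- vscal_distr_s.
  replace (1 + -1) with 0 by ring. apply vscal_0.
Qed.

Lemma vnorm_opp (X : Banach) (x : X) : vnorm (vopp x) = vnorm x.
Proof. rewrite vopp_scal, vnorm_scal. replace (Rabs (-1)) with 1 by (rewrite Rabs_left; lra). ring. Qed.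

Lemma vnorm_zero (X : Banach) : vnorm (@vzero X) = 0.
Proof. rewrite <- (vscal_0 X vzero), vnorm_scal, Rabs_R0; ring. Qed.

Lemma vnorm_nonneg (X : Banach) (x : X) : 0 <= vnorm x.
Proof.
  pose proof (vnorm_triangle X x (vopp x)) as H.
  rewrite vadd_opp, vnorm_zero, vnorm_opp in H. lra.
Qed.

Lemma vopp_opp (X : Banach) (x : X) : vopp (vopp x) = x.
Proof. symmetry; apply vopp_unique. apply vopp_l. Qed.

Lemma vopp_add (X : Banach) (x y : X) : vopp (vadd x y) = vadd (vopp x) (vopp y).
Proof. rewrite !vopp_scal. now rewrite vscal_distr_v. Qed.

Lemma vopp_zero (X : Banach) : vopp (@vzero X) = vzero.
Proof. rewrite vopp_scal. rewrite <- (vscal_0 X vzero) at 1. rewrite vscal_assoc. replace (-1 * 0) with 0 by ring. apply vscal_0. Qed.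

Lemma vadd_swap (X : Banach) (a b c d : X) :
  vadd (vadd a b) (vadd c d) = vadd (vadd a c) (vadd b d).
Proof.
  rewrite <- !vadd_assoc. f_equal. rewrite !vadd_assoc. f_equal. apply vadd_comm.
Qed.

Lemma vsub_xx (X : Banach) (x : X) : vsub x x = vzero.
Proof. apply vadd_opp. Qed.

Lemma vsub_0r (X : Banach) (x : X) : vsub x vzero = x.
Proof. unfold vsub. rewrite vopp_zero. apply vadd_0. Qed.

Lemma vsub_chain (X : Banach) (a b c : X) : vsub a c = vadd (vsub a b) (vsub b c).
Proof.
  unfold vsub. rewrite <- vadd_assoc. f_equal.
  rewrite vadd_assoc, vopp_l, vadd_0l. reflexivity.
Qed.

Lemma nsub_tri (X : Banach) (a b c : X) :
  vnorm (vsub a c) <= vnorm (vsub a b) + vnorm (vsub b c).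
Proof. rewrite (vsub_chain X a b c). apply vnorm_triangle. Qed.

Lemma vsub_opp (X : Banach) (a b : X) : vsub b a = vopp (vsub a b).
Proof. unfold vsub. rewrite vopp_add, vopp_opp. apply vadd_comm. Qed.

Lemma nsub_sym (X : Banach) (a b : X) : vnorm (vsub a b) = vnorm (vsub b a).
Proof. rewrite (vsub_opp X a b), vnorm_opp. reflexivity. Qed.

Lemma norm_le_sub (X : Banach) (a b : X) : vnorm a <= vnorm b + vnorm (vsub a b).
Proof.
  replace a with (vadd b (vsub a b)) at 1. apply vnorm_triangle.
  unfold vsub. rewrite vadd_comm, <- vadd_assoc, vopp_l, vadd_0. reflexivity.
Qed.

Lemma norm_sub_le (X : Banach) (a b : X) : vnorm (vsub a b) <= vnorm a + vnorm b.
Proof. unfold vsub. rewrite <- (vnorm_opp X b). apply vnorm_triangle. Qed.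

Lemma vsub_sub (X : Banach) (a b c d : X) :
  vsub (vsub a b) (vsub c d) = vsub (vsub a c) (vsub b d).
Proof.
  unfold vsub. rewrite !vopp_add, !vopp_opp. apply vadd_swap.
Qed.

Lemma nsub4 (X : Banach) (a b c d : X) :
  vnorm (vsub (vsub a b) (vsub c d)) <= vnorm (vsub a c) + vnorm (vsub b d).
Proof. rewrite vsub_sub. apply norm_sub_le. Qed.

Lemma vscal_opp (X : Banach) (s : R) (a : X) : vscal s (vopp a) = vopp (vscal s a).
Proof. rewrite !vopp_scal, !vscal_assoc. f_equal. ring. Qed.

Lemma vscal_sub (X : Banach) (s : R) (a b : X) :
  vscal s (vsub a b) = vsub (vscal s a) (vscal s b).
Proof. unfold vsub. rewrite vscal_distr_v, vscal_opp. reflexivity. Qed.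

Lemma nsub_scal (X : Banach) (s : R) (a b : X) :
  vnorm (vsub (vscal s a) (vscal s b)) = Rabs s * vnorm (vsub a b).
Proof. rewrite <- vscal_sub. apply vnorm_scal. Qed.

Lemma vscal_inv (X : Banach) (k : R) (a : X) : k <> 0 -> vscal k (vscal (/ k) a) = a.
Proof. intro H. rewrite vscal_assoc, Rinv_r by exact H. apply vscal_1. Qed.

Definition lin {X Y : Banach} (f : X -> Y) : Prop :=
  (forall x y, f (vadd x y) = vadd (f x) (f y)) /\
  (forall a x, f (vscal a x) = vscal a (f x)).

Lemma bdd_lin {X Y : Banach} (f : X -> Y) : bdd_linear f -> lin f.
Proof. intros [H1 [H2 _]]. split; assumption. Qed.

Lemma lin_opp {X Y : Banach} (f : X -> Y) x : lin f -> f (vopp x) = vopp (f x).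
Proof. intros [H1 H2]. rewrite !vopp_scal. apply H2. Qed.

Lemma lin_sub {X Y : Banach} (f : X -> Y) x y : lin f -> f (vsub x y) = vsub (f x) (f y).
Proof. intros Hf. unfold vsub. rewrite (proj1 Hf), lin_opp; auto. Qed.

Lemma lin_nsub {X Y : Banach} (f : X -> Y) L x y : lin f -> op_norm_le f L ->
  vnorm (vsub (f x) (f y)) <= L * vnorm (vsub x y).
Proof. intros Hf HL. rewrite <- lin_sub by exact Hf. apply HL. Qed.

Lemma lin_scal {X Y : Banach} (f : X -> Y) a x : lin f -> f (vscal a x) = vscal a (f x).
Proof. intros [_ H]. apply H. Qed.

Lemma Rabs_le_between' (x a : R) : Rabs x <= a -> - a <= x <= a.
Proof. intro H. pose proof (Rle_abs x). pose proof (Rle_abs (-x)). rewrite Rabs_Ropp in *. lra. Qed.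

Lemma mvi_aux (phi : R -> R) (r B e : R) :
  0 <= r -> phi 0 <= 0 -> 0 < e ->
  (forall c, 0 <= c <= r -> forall e, 0 < e -> exists d, 0 < d /\
     forall u, 0 <= u <= r -> Rabs (u - c) < d -> Rabs (phi u - phi c) <= e) ->
  (forall c, 0 <= c < r -> forall e, 0 < e -> exists d, 0 < d /\
     forall k, 0 < k < d -> phi (c + k) <= phi c + (B + e) * k) ->
  phi r <= (B + e) * r + e.
Proof.
  intros Hr H0 He Hcont Hder.
  set (E := fun s => 0 <= s <= r /\ forall u, 0 <= u <= s -> phi u <= (B + e) * u + e).
  assert (HE0 : E 0).
  { split. lra. intros u Hu. replace u with 0 by lra. lra. }
  assert (Hb : bound E). { exists r. intros s [Hs _]. lra. }
  destruct (completeness E Hb (ex_intro _ 0 HE0)) as [c [Hub Hlub]].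
  assert (Hc0 : 0 <= c) by (apply Hub; exact HE0).
  assert (Hcr : c <= r). { apply Hlub. intros s [Hs _]. lra. }
  assert (Hbelow : forall u, 0 <= u < c -> phi u <= (B + e) * u + e).
  { intros u Hu. destruct (classic (exists s, E s /\ u < s)) as [[s [[_ Hs] Hus]]|Hn].
    - apply Hs. lra.
    - exfalso. assert (c <= u); [|lra]. apply Hlub. intros s Hs.
      destruct (Rle_dec s u) as [|Hsu]; [assumption|]. exfalso. apply Hn. exists s. split; [exact Hs|lra]. }
  assert (Hc : phi c <= (B + e) * c + e).
  { destruct (Rle_dec (phi c) ((B + e) * c + e)) as [|Hgt]; [assumption|]. exfalso.
    set (g := phi c - ((B + e) * c + e)).
    assert (Hg : 0 < g) by (unfold g; lra).
    destruct (Rle_lt_or_eq_dec 0 c Hc0) as [Hcpos|Hc0'].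
    2:{ rewrite <- Hc0' in Hgt. lra. }
    destruct (Hcont c (conj Hc0 Hcr) (g / 2) ltac:(lra)) as [d [Hd Hdc]].
    set (a := Rabs (B + e) + 1).
    assert (Ha : 1 <= a) by (unfold a; pose proof (Rabs_pos (B + e)); lra).
    set (d' := Rmin d (Rmin c (g / (2 * a)))).
    assert (Hd'1 : d' <= d) by apply Rmin_l.
    assert (Hd'2 : d' <= c) by (unfold d'; eapply Rle_trans; [apply Rmin_r|apply Rmin_l]).
    assert (Hd'3 : d' <= g / (2 * a)) by (unfold d'; eapply Rle_trans; [apply Rmin_r|apply Rmin_r]).
    assert (Hd'p : 0 < d').
    { unfold d'. apply Rmin_pos; [lra|]. apply Rmin_pos; [lra|]. apply Rdiv_lt_0_compat; lra. }
    set (u := c - d' / 2).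
    assert (Hu1 : phi u <= (B + e) * u + e) by (apply Hbelow; unfold u; lra).
    assert (Hu2 : Rabs (phi u - phi c) <= g / 2).
    { apply Hdc. unfold u; lra. unfold u. rewrite Rabs_left; lra. }
    assert (Hk : d' * (2 * a) <= g).
    { apply (Rmult_le_compat_r (2 * a)) in Hd'3; [|lra].
      unfold Rdiv in Hd'3. rewrite Rmult_assoc, Rinv_l in Hd'3 by lra. lra. }
    assert (Hab : - (B + e) <= Rabs (B + e)) by (rewrite <- Rabs_Ropp; apply Rle_abs).
    assert (Hm : - (B + e) * (d' / 2) <= Rabs (B + e) * (d' / 2)).
    { apply Rmult_le_compat_r; lra. }
    assert (Hm2 : Rabs (B + e) * d' <= g / 2).
    { unfold a in Hk. assert (0 <= Rabs (B+e)) by apply Rabs_pos. nra. }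
    apply Rabs_le_between' in Hu2.
    assert (Heq : (B + e) * u = (B + e) * c + (- (B + e)) * (d' / 2)) by (unfold u; ring).
    assert (Hgd : g = phi c - ((B + e) * c + e)) by reflexivity.
    clearbody g u. lra. }
  assert (HEc : E c).
  { split. lra. intros u Hu. destruct (Req_dec u c) as [->|Hne]. exact Hc. apply Hbelow. lra. }
  assert (Hcr' : c = r).
  { destruct (Rle_lt_or_eq_dec c r Hcr) as [Hlt|]; [|assumption]. exfalso.
    destruct (Hder c (conj Hc0 Hlt) e He) as [d [Hd Hdd]].
    set (k := Rmin (d / 2) (r - c)).
    assert (Hk1 : k <= d / 2) by apply Rmin_l.
    assert (Hk2 : k <= r - c) by apply Rmin_r.
    assert (Hkp : 0 < k) by (apply Rmin_pos; lra).
    assert (E (c + k)).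
    { split. lra. intros u Hu. destruct (Rle_dec u c) as [Huc|Huc].
      - apply (proj2 HEc). lra.
      - replace u with (c + (u - c)) by ring.
        pose proof (Hdd (u - c) ltac:(lra)) as Hh.
        assert (Heq : (B + e) * (c + (u - c)) = (B + e) * c + (B + e) * (u - c)) by ring.
        rewrite Heq. lra. }
    pose proof (Hub _ H). lra. }
  subst c. apply (proj2 HEc). lra.
Qed.

Lemma mvi (phi : R -> R) (r B : R) :
  0 <= r -> phi 0 <= 0 ->
  (forall c, 0 <= c <= r -> forall e, 0 < e -> exists d, 0 < d /\
     forall u, 0 <= u <= r -> Rabs (u - c) < d -> Rabs (phi u - phi c) <= e) ->
  (forall c, 0 <= c < r -> forall e, 0 < e -> exists d, 0 < d /\
     forall k, 0 < k < d -> phi (c + k) <= phi c + (B + e) * k) ->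
  phi r <= B * r.
Proof.
  intros Hr H0 Hcont Hder.
  destruct (Rle_dec (phi r) (B * r)) as [|Hgt]; [assumption|]. exfalso.
  set (g := phi r - B * r).
  assert (Hg : 0 < g) by (unfold g; lra).
  set (e := g / (2 * (r + 1))).
  assert (He : 0 < e) by (unfold e; apply Rdiv_lt_0_compat; lra).
  pose proof (mvi_aux phi r B e Hr H0 He Hcont Hder) as H.
  assert (He2 : e * (2 * (r + 1)) = g) by (unfold e; field; lra).
  unfold g in *. nra.
Qed.

Lemma vsub_eq0 (X : Banach) (a b : X) : vsub a b = vzero -> a = b.
Proof.
  intro H. unfold vsub in H. apply vopp_unique in H.
  rewrite <- (vopp_opp X a), <- H, vopp_opp. reflexivity.
Qed.

Lemma norm_small_eq (X : Banach) (a b : X) :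
  (forall e, 0 < e -> vnorm (vsub a b) <= e) -> a = b.
Proof.
  intro H. apply vsub_eq0, vnorm_eq0. pose proof (vnorm_nonneg X (vsub a b)) as H0.
  destruct (Rle_lt_or_eq_dec 0 _ H0) as [Hp|Hz]; [|auto].
  specialize (H (vnorm (vsub a b) / 2) ltac:(lra)). lra.
Qed.

Lemma rlim0_unique (X : Banach) (f : R -> X) l1 l2 : rlim0 f l1 -> rlim0 f l2 -> l1 = l2.
Proof.
  intros H1 H2. apply norm_small_eq. intros e He.
  destruct (H1 (e/2) ltac:(lra)) as [d1 [Hd1 H1']].
  destruct (H2 (e/2) ltac:(lra)) as [d2 [Hd2 H2']].
  set (h := Rmin d1 d2 / 2).
  assert (Hh : 0 < h < d1 /\ 0 < h < d2).
  { unfold h. pose proof (Rmin_l d1 d2). pose proof (Rmin_r d1 d2).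
    pose proof (Rmin_pos d1 d2 Hd1 Hd2). lra. }
  pose proof (H1' h (proj1 Hh)). pose proof (H2' h (proj2 Hh)).
  pose proof (nsub_tri X l1 (f h) l2). rewrite nsub_sym in H. lra.
Qed.

Lemma bdd_pos_bound {X Y : Banach} (f : X -> Y) : bdd_linear f ->
  exists C, 0 < C /\ op_norm_le f C.
Proof.
  intros [_ [_ [C HC]]]. exists (Rabs C + 1). split.
  pose proof (Rabs_pos C); lra.
  intro x. eapply Rle_trans; [apply HC|]. apply Rmult_le_compat_r.
  apply vnorm_nonneg. pose proof (Rle_abs C). lra.
Qed.

Lemma rev_tri (X : Banach) (a b : X) : Rabs (vnorm a - vnorm b) <= vnorm (vsub a b).
Proof.
  apply Rabs_le. pose proof (norm_le_sub X a b). pose proof (norm_le_sub X b a).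
  rewrite nsub_sym in H0. lra.
Qed.

Lemma sg_lin {X : Banach} (S : R -> X -> X) t : C0_semigroup S -> 0 <= t -> lin (S t).
Proof. intros [H _] Ht. apply bdd_lin, H, Ht. Qed.

Lemma sg_0 {X : Banach} (S : R -> X -> X) x : C0_semigroup S -> S 0 x = x.
Proof. intros [_ [H _]]. apply H. Qed.

Lemma sg_add {X : Banach} (S : R -> X -> X) t s x : C0_semigroup S -> 0 <= t -> 0 <= s ->
  S (t + s) x = S t (S s x).
Proof. intros [_ [_ [H _]]]. apply H. Qed.

Lemma sg_cont {X : Banach} (S : R -> X -> X) x t : C0_semigroup S -> 0 <= t ->
  forall eps, 0 < eps -> exists delta, 0 < delta /\
     forall s, 0 <= s -> Rabs (s - t) < delta -> vnorm (vsub (S s x) (S t x)) <= eps.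
Proof. intros [_ [_ [_ H]]]. apply H. Qed.

Lemma sg_bound {X : Banach} (S : R -> X -> X) MT wT H : C0_semigroup S -> 1 <= MT -> 0 <= H ->
  (forall h, 0 < h -> op_norm_le (S h) (MT * exp (wT * h))) ->
  forall s, 0 <= s <= H -> op_norm_le (S s) (MT * exp (Rabs wT * H)).
Proof.
  intros HS HMT HH Hb s Hs y.
  assert (He : 1 <= exp (Rabs wT * H)).
  { rewrite <- exp_0. destruct (Rle_lt_or_eq_dec 0 (Rabs wT * H)) as [Hl|He].
    pose proof (Rabs_pos wT); nra. left; apply exp_increasing; exact Hl. rewrite He; lra. }
  pose proof (vnorm_nonneg X y).
  destruct (Rle_lt_or_eq_dec 0 s (proj1 Hs)) as [Hp|Hz].
  - eapply Rle_trans; [apply Hb, Hp|]. apply Rmult_le_compat_r; [assumption|].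
    apply Rmult_le_compat_l; [lra|].
    destruct (Rle_lt_or_eq_dec (wT * s) (Rabs wT * H)) as [Hl|Hq].
    + assert (wT * s <= Rabs wT * s) by (apply Rmult_le_compat_r; [lra|apply Rle_abs]).
      assert (Rabs wT * s <= Rabs wT * H) by (apply Rmult_le_compat_l; [apply Rabs_pos|lra]). lra.
    + left; apply exp_increasing; exact Hl.
    + rewrite Hq; lra.
  - subst s. rewrite sg_0 by exact HS.
    assert (1 <= MT * exp (Rabs wT * H)) by nra. nra.
Qed.

Definition quot {X : Banach} (S : R -> X -> X) (x : X) (h : R) : X :=
  vscal (/ h) (vsub (S h x) x).

Lemma gen_lim {X : Banach} S D A (x : X) : generator S D A -> D x -> rlim0 (quot S x) (A x).
Proof. intros HG Hx. apply (proj2 (HG x) Hx). Qed.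

Lemma gen_D {X : Banach} S D A (x : X) y : generator S D A -> rlim0 (quot S x) y -> D x.
Proof. intros HG Hy. apply (proj1 (HG x)). exists y. exact Hy. Qed.

Lemma gen_A {X : Banach} S D A (x : X) y : generator S D A -> rlim0 (quot S x) y -> A x = y.
Proof. intros HG Hy. eapply rlim0_unique; [|exact Hy]. apply (gen_lim S D A); auto. eapply gen_D; eauto. Qed.

Lemma lin_rlim0 {X Y : Banach} (f : X -> Y) (g : R -> X) l : bdd_linear f -> rlim0 g l ->
  rlim0 (fun h => f (g h)) (f l).
Proof.
  intros Hf Hg e He. destruct (bdd_pos_bound f Hf) as [C [HC HfC]].
  destruct (Hg (e / C) ltac:(apply Rdiv_lt_0_compat; lra)) as [d [Hd Hd']].
  exists d. split; [exact Hd|]. intros h Hh.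
  eapply Rle_trans; [apply lin_nsub; [apply bdd_lin; exact Hf|exact HfC]|].
  specialize (Hd' h Hh). apply (Rmult_le_compat_l C) in Hd'; [|lra].
  replace (C * (e / C)) with e in Hd' by (field; lra). exact Hd'.
Qed.

Lemma rlim0_ext {X : Banach} (f g : R -> X) l : (forall h, 0 < h -> f h = g h) -> rlim0 f l -> rlim0 g l.
Proof.
  intros Heq Hf e He. destruct (Hf e He) as [d [Hd Hd']]. exists d. split; auto.
  intros h Hh. rewrite <- Heq by lra. auto.
Qed.

Lemma sg_D {X : Banach} S D A (x : X) s : C0_semigroup S -> generator S D A -> 0 <= s -> D x ->
  D (S s x) /\ A (S s x) = S s (A x).
Proof.
  intros HS HG Hs Hx.
  assert (Hl : rlim0 (quot S (S s x)) (S s (A x))).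
  { eapply rlim0_ext; [|apply lin_rlim0; [apply (proj1 HS s Hs)|apply (gen_lim S D A x HG Hx)]].
    intros h Hh. cbn. unfold quot.
    rewrite lin_scal, lin_sub by (apply sg_lin; auto).
    rewrite <- !sg_add by (auto; lra). rewrite Rplus_comm. reflexivity. }
  split. eapply gen_D; eauto. eapply gen_A; eauto.
Qed.

Lemma D_sub {X : Banach} S D A (x y : X) : C0_semigroup S -> generator S D A -> D x -> D y ->
  D (vsub x y).
Proof.
  intros HS HG Hx Hy. apply (gen_D S D A _ (vsub (A x) (A y)) HG).
  pose proof (gen_lim S D A x HG Hx) as Lx. pose proof (gen_lim S D A y HG Hy) as Ly.
  intros e He. destruct (Lx (e/2) ltac:(lra)) as [d1 [Hd1 H1]].
  destruct (Ly (e/2) ltac:(lra)) as [d2 [Hd2 H2]].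
  exists (Rmin d1 d2). split. apply Rmin_pos; auto. intros h Hh.
  pose proof (Rmin_l d1 d2). pose proof (Rmin_r d1 d2).
  unfold quot. rewrite (lin_sub (S h)) by (apply sg_lin; auto; lra).
  rewrite (vsub_sub X (S h x) (S h y) x y), (vscal_sub X). eapply Rle_trans; [apply nsub4|].
  specialize (H1 h ltac:(lra)). specialize (H2 h ltac:(lra)). unfold quot in *. lra.
Qed.

Lemma D_scal {X : Banach} S D A (x : X) a : C0_semigroup S -> generator S D A -> D x ->
  D (vscal a x).
Proof.
  intros HS HG Hx. apply (gen_D S D A _ (vscal a (A x)) HG).
  pose proof (gen_lim S D A x HG Hx) as Lx.
  intros e He. destruct (Lx (e/(Rabs a + 1))) as [d [Hd H1]].
  { apply Rdiv_lt_0_compat; [lra|]. pose proof (Rabs_pos a); lra. }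
  exists d. split; auto. intros h Hh.
  unfold quot. rewrite (lin_scal (S h)) by (apply sg_lin; auto; lra).
  rewrite <- vscal_sub, !vscal_assoc, Rmult_comm, <- vscal_assoc, nsub_scal.
  specialize (H1 h Hh). unfold quot in H1.
  pose proof (Rabs_pos a). pose proof (vnorm_nonneg X (vsub (vscal (/ h) (vsub (S h x) x)) (A x))).
  apply (Rmult_le_compat_l (Rabs a)) in H1; [|lra].
  assert (Rabs a * (e / (Rabs a + 1)) <= e).
  { unfold Rdiv. rewrite <- Rmult_assoc. apply (Rmult_le_reg_r (Rabs a + 1)); [lra|].
    rewrite Rmult_assoc, Rinv_l by lra. nra. }
  lra.
Qed.

Lemma D_quot {X : Banach} S D A (x : X) h : C0_semigroup S -> generator S D A -> 0 <= h -> D x ->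
  D (quot S x h).
Proof.
  intros HS HG Hh Hx. unfold quot. apply (D_scal S D A); auto. apply (D_sub S D A); auto.
  apply (sg_D S D A); auto.
Qed.

Lemma sg_ucont {X : Banach} (S : R -> X -> X) K H (y : X) : C0_semigroup S -> 0 < K ->
  (forall s, 0 <= s <= H -> op_norm_le (S s) K) ->
  forall e, 0 < e -> exists d, 0 < d /\ forall s s', 0 <= s <= H -> 0 <= s' <= H ->
    Rabs (s - s') <= d -> vnorm (vsub (S s y) (S s' y)) <= e.
Proof.
  intros HS HK Hb e He. destruct (sg_cont S y 0 HS (Rle_refl 0) (e / K) ltac:(apply Rdiv_lt_0_compat; lra))
    as [d [Hd Hd']].
  exists (d / 2). split; [lra|].
  assert (Hmain : forall s s', 0 <= s' <= s -> s <= H -> s - s' <= d / 2 ->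
    vnorm (vsub (S s y) (S s' y)) <= e).
  { intros s s' Hss Hs Hd2. replace s with (s' + (s - s')) by ring.
    rewrite sg_add by (auto; lra).
    eapply Rle_trans. apply lin_nsub. apply sg_lin; auto; lra. apply Hb; lra.
    specialize (Hd' (s - s') ltac:(lra) ltac:(rewrite Rminus_0_r, Rabs_right; lra)).
    apply (Rmult_le_compat_l K) in Hd'; [|lra].
    replace (K * (e / K)) with e in Hd' by (field; lra). rewrite sg_0 in Hd' by auto. exact Hd'. }
  intros s s' Hs Hs' Hab.
  destruct (Rle_dec s' s).
  - apply Hmain; try lra. apply Rabs_le_between' in Hab. lra.
  - rewrite nsub_sym. apply Hmain; try lra. apply Rabs_le_between' in Hab. lra.
Qed.

Lemma step_lemma {Y Z : Banach} (S1 : R -> Y -> Y) D1 A1 (S2 : R -> Z -> Z) D2 A2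
  (P : Y -> Z) MP K H :
  C0_semigroup S1 -> generator S1 D1 A1 -> C0_semigroup S2 -> generator S2 D2 A2 ->
  lin P -> op_norm_le P MP -> 0 < MP -> 0 < K ->
  (forall s, 0 <= s <= H -> op_norm_le (S1 s) K) ->
  (forall s, 0 <= s <= H -> op_norm_le (S2 s) K) ->
  forall z B sig, D1 z -> D2 (P z) -> 0 <= sig <= H ->
  (forall s, 0 <= s <= sig -> vnorm (vsub (S2 s (A2 (P z))) (P (S1 s (A1 z)))) <= B) ->
  vnorm (vsub (S2 sig (P z)) (P (S1 sig z))) <= B * sig.
Proof.
  intros HS1 HG1 HS2 HG2 HP HPb HMP HK Hb1 Hb2 z B sig Hz HPz Hsig HB.
  set (f := fun u => vsub (S2 u (P z)) (P (S1 u z))).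
  apply (mvi (fun u => vnorm (f u))).
  - lra.
  - unfold f. rewrite (sg_0 S1), (sg_0 S2), vsub_xx, vnorm_zero by auto. lra.
  - intros c Hc e He.
    destruct (sg_cont S2 (P z) c HS2 ltac:(lra) (e/2) ltac:(lra)) as [d1 [Hd1 H1]].
    destruct (sg_cont S1 z c HS1 ltac:(lra) (e/(2*MP))) as [d2 [Hd2 H2]].
    { apply Rdiv_lt_0_compat; lra. }
    exists (Rmin d1 d2). split. apply Rmin_pos; auto. intros u Hu Hud.
    pose proof (Rmin_l d1 d2). pose proof (Rmin_r d1 d2).
    eapply Rle_trans; [apply rev_tri|]. unfold f. eapply Rle_trans; [apply nsub4|].
    specialize (H1 u ltac:(lra) ltac:(lra)). specialize (H2 u ltac:(lra) ltac:(lra)).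
    pose proof (lin_nsub P MP (S1 u z) (S1 c z) HP HPb).
    apply (Rmult_le_compat_l MP) in H2; [|lra].
    replace (MP * (e / (2 * MP))) with (e/2) in H2 by (field; lra). lra.
  - intros c Hc e He.
    pose proof (gen_lim S2 D2 A2 (P z) HG2 HPz) as L2.
    pose proof (gen_lim S1 D1 A1 z HG1 Hz) as L1.
    destruct (L2 (e/(2*K))) as [d1 [Hd1 H1]]. { apply Rdiv_lt_0_compat; lra. }
    destruct (L1 (e/(2*K*MP))) as [d2 [Hd2 H2]]. { apply Rdiv_lt_0_compat; [lra|]. nra. }
    exists (Rmin d1 d2). split. apply Rmin_pos; auto. intros k Hk.
    pose proof (Rmin_l d1 d2). pose proof (Rmin_r d1 d2).
    specialize (H1 k ltac:(lra)). specialize (H2 k ltac:(lra)).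
    set (d := vsub (S2 c (A2 (P z))) (P (S1 c (A1 z)))).
    assert (Hd : vnorm d <= B) by (apply HB; lra).
    set (w := vsub (S2 c (quot S2 (P z) k)) (P (S1 c (quot S1 z k)))).
    assert (Hw : vsub (f (c + k)) (f c) = vscal k w).
    { unfold f, w, quot. rewrite !(sg_add S2), !(sg_add S1) by (auto; lra).
      rewrite (vsub_sub Z).
      rewrite <- (lin_sub (S2 c)) by (apply sg_lin; auto; lra).
      rewrite <- (lin_sub P) by auto.
      rewrite <- (lin_sub (S1 c)) by (apply sg_lin; auto; lra).
      rewrite (lin_scal (S2 c)) by (apply sg_lin; auto; lra).
      rewrite (lin_scal (S1 c)) by (apply sg_lin; auto; lra).
      rewrite (lin_scal P) by auto. rewrite <- (vscal_sub Z).
      rewrite vscal_inv by lra. reflexivity. }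
    assert (Hwd : vnorm (vsub w d) <= e).
    { unfold w, d. eapply Rle_trans; [apply nsub4|].
      pose proof (lin_nsub (S2 c) K (quot S2 (P z) k) (A2 (P z)) ltac:(apply sg_lin; auto; lra) ltac:(apply Hb2; lra)).
      pose proof (lin_nsub (S1 c) K (quot S1 z k) (A1 z) ltac:(apply sg_lin; auto; lra) ltac:(apply Hb1; lra)).
      pose proof (lin_nsub P MP (S1 c (quot S1 z k)) (S1 c (A1 z)) HP HPb).
      apply (Rmult_le_compat_l K) in H1; [|lra].
      apply (Rmult_le_compat_l K) in H2; [|lra].
      apply (Rmult_le_compat_l MP) in H2; [|lra].
      replace (K * (e / (2 * K))) with (e/2) in H1 by (field; lra).
      replace (MP * (K * (e / (2 * K * MP)))) with (e/2) in H2 by (field; lra).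
      unfold quot in *. nra. }
    assert (Hm : vnorm (f (c + k)) <= vnorm (f c) + vnorm (vsub (f (c + k)) (f c))) by apply norm_le_sub.
    rewrite Hw, vnorm_scal, Rabs_right in Hm by lra.
    pose proof (norm_le_sub Z w d). cbv beta. nra.
Qed.

Lemma floor_ex (eta h : R) : 0 < eta -> 0 <= h ->
  exists k : nat, INR k * eta <= h < INR (S k) * eta.
Proof.
  intros He Hh. destruct (INR_archimed eta h He) as [n Hn].
  revert Hn. induction n as [|n IH]; intro Hn.
  - simpl in Hn. lra.
  - destruct (Rlt_dec h (INR n * eta)) as [Hl|Hl].
    + apply IH; lra.
    + exists n. split; lra.
Qed.

Lemma mul_lt_nat (k J : nat) (d x : R) : 0 < d -> INR k * d <= x -> x < INR J * d -> (k < J)%nat.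
Proof.
  intros Hd H1 H2. apply INR_lt. apply (Rmult_lt_reg_r d); lra.
Qed.

Lemma unif_path {X : Banach} (g : R -> X) (a b : R) (phi : nat -> R -> X -> R) (Lc smax : R) :
  a <= b -> 0 <= Lc -> 0 < smax ->
  (forall e, 0 < e -> exists d, 0 < d /\ forall s s', a <= s <= b -> a <= s' <= b ->
     Rabs (s - s') <= d -> vnorm (vsub (g s) (g s')) <= e) ->
  (forall m sg w w', 0 <= sg <= smax -> phi m sg w <= phi m sg w' + Lc * vnorm (vsub w w')) ->
  (forall s, a <= s <= b -> forall e, 0 < e -> exists s0, 0 < s0 /\ exists N,
     forall m sg, (N <= m)%nat -> 0 <= sg <= s0 -> phi m sg (g s) <= e) ->
  forall e, 0 < e -> exists s0, 0 < s0 /\ exists N, forall m sg s, (N <= m)%nat ->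
     0 <= sg <= s0 -> a <= s <= b -> phi m sg (g s) <= e.
Proof.
  intros Hab HLc Hsmax Hg Hlip Hpt e He.
  destruct (Hg (e / (2 * (Lc + 1)))) as [d [Hd Hgd]]. { apply Rdiv_lt_0_compat; lra. }
  set (gp := fun j : nat => Rmin (a + INR j * d) b).
  assert (Hgp : forall j, a <= gp j <= b).
  { intro j. unfold gp. split. apply Rmin_glb; [|lra]. pose proof (pos_INR j). nra. apply Rmin_r. }
  assert (Hfin : forall J, exists s0, 0 < s0 /\ exists N, forall j m sg, (j <= J)%nat -> (N <= m)%nat ->
     0 <= sg <= s0 -> phi m sg (g (gp j)) <= e / 2).
  { induction J as [|J IH].
    - destruct (Hpt (gp 0%nat) (Hgp 0%nat) (e/2) ltac:(lra)) as [s0 [Hs0 [N HN]]].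
      exists s0. split; auto. exists N. intros j m sg Hj Hm Hsg. replace j with 0%nat by lia. auto.
    - destruct IH as [s0 [Hs0 [N HN]]].
      destruct (Hpt (gp (S J)) (Hgp (S J)) (e/2) ltac:(lra)) as [s1 [Hs1 [N1 HN1]]].
      exists (Rmin s0 s1). split. apply Rmin_pos; auto. exists (Nat.max N N1).
      intros j m sg Hj Hm Hsg. pose proof (Rmin_l s0 s1). pose proof (Rmin_r s0 s1).
      destruct (Nat.eq_dec j (S J)) as [->|Hne].
      + apply HN1; [lia|lra].
      + apply HN; [lia|lia|lra]. }
  destruct (INR_archimed d (b - a) Hd) as [J HJ].
  destruct (Hfin J) as [s0 [Hs0 [N HN]]].
  exists (Rmin s0 smax). split. apply Rmin_pos; auto. exists N.
  intros m sg s Hm Hsg Hs. pose proof (Rmin_l s0 smax). pose proof (Rmin_r s0 smax).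
  destruct (floor_ex d (s - a) Hd ltac:(lra)) as [k [Hk1 Hk2]].
  assert (HkJ : (k < J)%nat) by (apply (mul_lt_nat k J d (s - a)); lra).
  assert (Hgpk : gp k = a + INR k * d) by (unfold gp; apply Rmin_left; lra).
  eapply Rle_trans; [apply (Hlip m sg (g s) (g (gp k))); lra|].
  assert (H1 : phi m sg (g (gp k)) <= e / 2) by (apply HN; [lia|lia|lra]).
  assert (H2 : vnorm (vsub (g s) (g (gp k))) <= e / (2 * (Lc + 1))).
  { apply Hgd; auto. rewrite Hgpk. rewrite S_INR in Hk2. rewrite Rabs_right; lra. }
  apply (Rmult_le_compat_l Lc) in H2; [|lra].
  assert (Lc * (e / (2 * (Lc + 1))) <= e / 2).
  { apply (Rmult_le_reg_r (2 * (Lc + 1))); [lra|].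
    replace (Lc * (e / (2 * (Lc + 1))) * (2 * (Lc + 1))) with (Lc * e) by (field; lra). nra. }
  lra.
Qed.

Lemma fin_max (Pr : nat -> nat -> Prop) (J : nat) :
  (forall j, (j <= J)%nat -> exists N, forall m, (N <= m)%nat -> Pr j m) ->
  exists N, forall j m, (j <= J)%nat -> (N <= m)%nat -> Pr j m.
Proof.
  induction J as [|J IH]; intro H.
  - destruct (H 0%nat (le_n _)) as [N HN]. exists N. intros j m Hj Hm. replace j with 0%nat by lia. auto.
  - destruct IH as [N HN]. { intros j Hj. apply H. lia. }
    destruct (H (S J) (le_n _)) as [N1 HN1]. exists (Nat.max N N1).
    intros j m Hj Hm. destruct (Nat.eq_dec j (S J)) as [->|]. apply HN1; lia. apply HN; lia.
Qed.

Lemma nlip (X : Banach) (a b a' b' : X) :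
  vnorm (vsub a b) <= vnorm (vsub a' b') + (vnorm (vsub a a') + vnorm (vsub b b')).
Proof.
  eapply Rle_trans; [apply (norm_le_sub X (vsub a b) (vsub a' b'))|].
  apply Rplus_le_compat_l. apply nsub4.
Qed.

Lemma small_prod (a e : R) : 0 <= a -> 0 < e -> a * (e / (2 * (a + 1))) <= e / 2.
Proof.
  intros Ha He. apply (Rmult_le_reg_r (2 * (a + 1))); [lra|].
  replace (a * (e / (2 * (a + 1))) * (2 * (a + 1))) with (a * e) by (field; lra). nra.
Qed.

Theorem mainTheorem3
  (X : Banach) (Xm : nat -> Banach)
  (P : forall m, X -> Xm m) (J : forall m, Xm m -> X) (MJ MP : R)
  (* approximation properties *)
  (HP : forall m, bdd_linear (P m)) (HJ : forall m, bdd_linear (J m))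
  (HPJ : forall m (y : Xm m), P m (J m y) = y)
  (HJP : forall x, seq_lim (fun m => J m (P m x)) x)
  (HMJ : 0 < MJ) (HMP : 0 < MP)
  (HJb : forall m, op_norm_le (J m) MJ) (HPb : forall m, op_norm_le (P m) MP)
  (* semigroups and generators *)
  (T : R -> X -> X) (D : X -> Prop) (A : X -> X)
  (Tm : forall m, R -> Xm m -> Xm m) (Dm : forall m, Xm m -> Prop)
  (Am : forall m, Xm m -> Xm m)
  (HT : C0_semigroup T) (HA : generator T D A)
  (HTm : forall m, C0_semigroup (Tm m)) (HAm : forall m, generator (Tm m) (Dm m) (Am m))
  (MT wT : R) (HMT : 1 <= MT)
  (HTb : forall h, 0 < h -> op_norm_le (T h) (MT * exp (wT * h)))
  (HTmb : forall m h, 0 < h -> op_norm_le (Tm m h) (MT * exp (wT * h)))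
  (HAconv : forall x, D x ->
     (exists N, forall m, (N <= m)%nat -> Dm m (P m x)) /\
     seq_lim (fun m => J m (Am m (P m x))) (A x))
  (t0 : R) (Ht0 : 0 < t0) :
  forall t, 0 < t <= t0 -> forall x, D x ->
    (* double limit n, m -> oo *)
    (forall eps, 0 < eps -> exists N, forall n m, (1 <= n)%nat -> (N <= n)%nat -> (N <= m)%nat ->
       vnorm (vsub (vscal (/ (t / INR n)) (vsub (J m (Tm m (t / INR n) (P m x))) (J m (P m x))))
                   (A x)) <= eps) /\
    (* the limit as m -> oo is uniform in n *)
    (forall eps, 0 < eps -> exists N, forall n m, (1 <= n)%nat -> (N <= m)%nat ->
       vnorm (vsub (vscal (/ (t / INR n)) (vsub (J m (Tm m (t / INR n) (P m x))) (J m (P m x))))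
                   (vscal (/ (t / INR n)) (vsub (T (t / INR n) x) x))) <= eps).
Proof.
  intros t Ht x Hx.
  set (H := t + 1).
  set (K := MT * exp (Rabs wT * H)).
  assert (HK1 : 1 <= K).
  { unfold K. assert (1 <= exp (Rabs wT * H)).
    { rewrite <- exp_0. destruct (Rle_lt_or_eq_dec 0 (Rabs wT * H)) as [Hl|He].
      pose proof (Rabs_pos wT); unfold H; nra. left; apply exp_increasing; exact Hl. rewrite He; lra. }
    nra. }
  assert (HKT : forall s, 0 <= s <= H -> op_norm_le (T s) K).
  { apply (sg_bound T MT wT H HT HMT); [unfold H; lra|exact HTb]. }
  assert (HKm : forall m s, 0 <= s <= H -> op_norm_le (Tm m s) K).
  { intro m. apply (sg_bound (Tm m) MT wT H (HTm m) HMT); [unfold H; lra|apply HTmb]. }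
  assert (HlP : forall m, lin (P m)) by (intro; apply bdd_lin, HP).
  assert (HlJ : forall m, lin (J m)) by (intro; apply bdd_lin, HJ).
  assert (HlT : forall s, 0 <= s -> lin (T s)) by (intros; apply sg_lin; auto).
  assert (HlTm : forall m s, 0 <= s -> lin (Tm m s)) by (intros; apply sg_lin; auto).
  assert (HHdef : H = t + 1) by reflexivity.
  clearbody K H.
  set (phi := fun m sg w => vnorm (vsub (Tm m sg (P m w)) (P m (T sg w)))).
  assert (HDB : forall m z sg, D z -> 0 <= sg <= H ->
     vnorm (vsub (Tm m sg (Am m (P m z))) (P m (T sg (A z)))) <=
       K * MP * vnorm (vsub (J m (Am m (P m z))) (A z)) + phi m sg (A z)).
  { intros m z sg Hz Hsg. unfold phi.
    eapply Rle_trans; [apply (nsub_tri _ _ (Tm m sg (P m (A z))))|].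
    apply Rplus_le_compat_r. rewrite <- (HPJ m (Am m (P m z))) at 1.
    eapply Rle_trans; [apply lin_nsub; [apply HlTm; lra|apply HKm; lra]|].
    rewrite Rmult_assoc. apply Rmult_le_compat_l; [lra|]. apply lin_nsub; auto. }
  set (Lc := 2 * K * MP).
  assert (HLc : 0 <= Lc) by (unfold Lc; nra).
  assert (Hlip : forall m sg w w', 0 <= sg <= H -> phi m sg w <= phi m sg w' + Lc * vnorm (vsub w w')).
  { intros m sg w w' Hsg. unfold phi. eapply Rle_trans; [apply nlip|]. apply Rplus_le_compat_l.
    pose proof (lin_nsub (Tm m sg) K (P m w) (P m w') ltac:(apply HlTm; lra) ltac:(apply HKm; lra)).
    pose proof (lin_nsub (P m) MP w w' (HlP m) (HPb m)).
    pose proof (lin_nsub (T sg) K w w' ltac:(apply HlT; lra) ltac:(apply HKT; lra)).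
    pose proof (lin_nsub (P m) MP (T sg w) (T sg w') (HlP m) (HPb m)).
    pose proof (vnorm_nonneg _ (vsub w w')).
    unfold Lc. nra. }
  assert (U1 : forall e, 0 < e -> exists s0, 0 < s0 /\ exists N, forall m sg s, (N <= m)%nat ->
     0 <= sg <= s0 -> 0 <= s <= H -> phi m sg (T s (A x)) <= e).
  { apply (unif_path (fun s => T s (A x)) 0 H phi Lc H); try lra.
    - apply (sg_ucont T K H (A x) HT); auto; lra.
    - exact Hlip.
    - intros s Hs e He.
      destruct (gen_lim T D A x HA Hx (e / (2 * (Lc * K + 1)))) as [d [Hd Hd']].
      { apply Rdiv_lt_0_compat; [lra|]. nra. }
      set (q := quot T x (d/2)).
      assert (Hq : vnorm (vsub q (A x)) <= e / (2 * (Lc * K + 1))) by (apply Hd'; lra).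
      assert (Dq : D q) by (apply (D_quot T D A); auto; lra).
      set (u := T s q).
      assert (Du : D u) by (apply (sg_D T D A); auto; lra).
      assert (Hwu : vnorm (vsub (T s (A x)) u) <= K * vnorm (vsub (A x) q)).
      { apply lin_nsub. apply HlT; lra. apply HKT; lra. }
      rewrite nsub_sym in Hq.
      destruct (HAconv u Du) as [[N1 HN1] Hc].
      destruct (Hc 1 ltac:(lra)) as [N2 HN2].
      set (B := K * MP * 1 + 2 * K * MP * vnorm (A u)).
      assert (HKMP : 0 < K * MP) by nra.
      assert (HB : 0 <= B).
      { unfold B. pose proof (Rmult_le_pos (K * MP) (vnorm (A u)) ltac:(lra) (vnorm_nonneg _ _)). nra. }
      exists (Rmin H (e / (2 * (B + 1)))). split.
      { apply Rmin_pos. lra. apply Rdiv_lt_0_compat; lra. }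
      exists (Nat.max N1 N2). intros m sg Hm Hsg.
      pose proof (Rmin_l H (e / (2 * (B + 1)))). pose proof (Rmin_r H (e / (2 * (B + 1)))).
      assert (Hpu : phi m sg u <= B * sg).
      { unfold phi. apply (step_lemma T D A (Tm m) (Dm m) (Am m) (P m) MP K H); auto; try lra.
        apply HN1; lia. intros s' Hs'.
        eapply Rle_trans; [apply HDB; auto; lra|].
        specialize (HN2 m ltac:(lia)).
        unfold phi. eapply Rle_trans; [apply Rplus_le_compat; [apply Rmult_le_compat_l; [nra|exact HN2]|apply norm_sub_le]|].
        pose proof (HKm m s' ltac:(lra) (P m (A u))). pose proof (HPb m (A u)).
        pose proof (HPb m (T s' (A u))). pose proof (HKT s' ltac:(lra) (A u)).
        pose proof (vnorm_nonneg _ (A u)). unfold B. nra. }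
      pose proof (Hlip m sg (T s (A x)) u ltac:(lra)).
      assert (B * sg <= e / 2).
      { eapply Rle_trans. apply Rmult_le_compat_l; [exact HB|]. apply (Rle_trans _ _ _ (proj2 Hsg)). exact H1.
        apply small_prod; lra. }
      assert (Lc * vnorm (vsub (T s (A x)) u) <= e / 2).
      { eapply Rle_trans. apply Rmult_le_compat_l; [exact HLc|]. eapply Rle_trans; [exact Hwu|].
        apply Rmult_le_compat_l; [lra|exact Hq].
        rewrite <- Rmult_assoc. apply small_prod; [nra|lra]. }
      cbv beta. lra. }
  assert (Mest : forall e, 0 < e -> exists N, forall m h, (N <= m)%nat -> 0 < h <= t ->
     vnorm (vsub (Tm m h (P m x)) (P m (T h x))) <= e * h).
  { intros e He.
    assert (HKK : 0 < K * K) by nra.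
    set (B := e / (K * K)).
    assert (HBp : 0 < B) by (apply Rdiv_lt_0_compat; lra).
    destruct (U1 (B/2) ltac:(lra)) as [eta1 [Heta1 [N1 HN1]]].
    set (eta := Rmin eta1 1).
    assert (Heta : 0 < eta) by (apply Rmin_pos; lra).
    assert (Heta1' : eta <= eta1) by apply Rmin_l.
    assert (Heta2 : eta <= 1) by apply Rmin_r.
    clearbody eta.
    destruct (floor_ex eta t Heta ltac:(lra)) as [k0 [Hk01 Hk02]].
    set (n0 := S k0).
    assert (Hn0 : INR n0 * eta <= H).
    { unfold n0. rewrite S_INR. lra. }
    set (zj := fun j : nat => T (INR j * eta) x).
    assert (HDz : forall j, D (zj j) /\ A (zj j) = T (INR j * eta) (A x)).
    { intro j. apply (sg_D T D A); auto. pose proof (pos_INR j). nra. }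
    assert (HKMP : 0 < K * MP) by nra.
    set (c := B / (2 * K * MP)).
    assert (Hcpos : 0 < c) by (apply Rdiv_lt_0_compat; nra).
    destruct (fin_max (fun j m => Dm m (P m (zj j)) /\
       vnorm (vsub (J m (Am m (P m (zj j)))) (A (zj j))) <= c) n0) as [N2 HN2].
    { intros j Hj. destruct (HAconv (zj j) (proj1 (HDz j))) as [[Na HNa] Hc].
      destruct (Hc c Hcpos) as [Nb HNb]. exists (Nat.max Na Nb). intros m Hm.
      split. apply HNa; lia. apply HNb; lia. }
    exists (Nat.max N1 N2). intros m h Hm Hh.
    assert (Hstep : forall j l, (j <= n0)%nat -> 0 <= l <= eta ->
      vnorm (vsub (Tm m l (P m (zj j))) (P m (T l (zj j)))) <= B * l).
    { intros j l Hj Hl. apply (step_lemma T D A (Tm m) (Dm m) (Am m) (P m) MP K H); auto; try lra.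
      - exact (proj1 (HDz j)).
      - apply (HN2 j m Hj); lia.
      - intros s' Hs'. eapply Rle_trans; [apply HDB; [exact (proj1 (HDz j))|lra]|].
        rewrite (proj2 (HDz j)).
        assert (Hjn : INR j <= INR n0) by (apply le_INR; exact Hj).
        pose proof (pos_INR j).
        assert (H1 : phi m s' (T (INR j * eta) (A x)) <= B / 2).
        { apply HN1; [lia|lra|]. split; [nra|]. nra. }
        assert (H2 : vnorm (vsub (J m (Am m (P m (zj j)))) (A (zj j))) <= c) by (apply (HN2 j m Hj); lia).
        rewrite (proj2 (HDz j)) in H2.
        assert (K * MP * c = B / 2) by (unfold c; field; nra).
        apply (Rmult_le_compat_l (K * MP)) in H2; [|lra]. lra. }
    assert (Htel : forall k j, (j + k <= n0)%nat ->
      vnorm (vsub (Tm m (INR k * eta) (P m (zj j))) (P m (T (INR k * eta) (zj j)))) <= K * (INR k * eta) * B).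
    { induction k as [|k IH]; intros j Hjk.
      - simpl. rewrite Rmult_0_l, (sg_0 (Tm m)), (sg_0 T), vsub_xx, vnorm_zero by auto. lra.
      - assert (Hkn : INR (S k) <= INR n0) by (apply le_INR; lia).
        rewrite S_INR in *. pose proof (pos_INR k).
        replace ((INR k + 1) * eta) with (INR k * eta + eta) by ring.
        rewrite (sg_add (Tm m)), (sg_add T) by (auto; nra).
        assert (Hz1 : T eta (zj j) = zj (S j)).
        { unfold zj. rewrite <- (sg_add T) by (auto; pose proof (pos_INR j); nra). f_equal. rewrite S_INR. ring. }
        rewrite Hz1.
        eapply Rle_trans; [apply (nsub_tri _ _ (Tm m (INR k * eta) (P m (zj (S j)))))|].
        assert (Ha : vnorm (vsub (Tm m (INR k * eta) (Tm m eta (P m (zj j)))) (Tm m (INR k * eta) (P m (zj (S j)))))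
           <= K * (B * eta)).
        { eapply Rle_trans; [apply lin_nsub; [apply HlTm; nra|apply HKm; nra]|].
          apply Rmult_le_compat_l; [lra|]. rewrite <- Hz1. apply Hstep; [lia|lra]. }
        specialize (IH (S j) ltac:(lia)). nra. }
    destruct (floor_ex eta h Heta ltac:(lra)) as [k [Hk1 Hk2]].
    assert (Hkk0 : (k < n0)%nat) by (apply (mul_lt_nat k n0 eta h); unfold n0; lra).
    set (r := h - INR k * eta).
    assert (Hr : 0 <= r < eta) by (unfold r; rewrite S_INR in Hk2; lra).
    assert (Hh' : h = r + INR k * eta) by (unfold r; ring).
    pose proof (pos_INR k).
    assert (Hkn : INR k <= INR n0) by (apply le_INR; lia).
    replace (Tm m h) with (Tm m (r + INR k * eta)) by (rewrite <- Hh'; reflexivity).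
    replace (T h) with (T (r + INR k * eta)) by (rewrite <- Hh'; reflexivity).
    rewrite (sg_add (Tm m)), (sg_add T) by (auto; nra).
    assert (Hzk : T (INR k * eta) x = zj k) by reflexivity.
    assert (Hz0 : zj 0%nat = x) by (unfold zj; simpl; rewrite Rmult_0_l; apply (sg_0 T); auto).
    rewrite Hzk.
    eapply Rle_trans; [apply (nsub_tri _ _ (Tm m r (P m (zj k))))|].
    assert (Ha : vnorm (vsub (Tm m r (Tm m (INR k * eta) (P m x))) (Tm m r (P m (zj k))))
       <= K * (K * (INR k * eta) * B)).
    { eapply Rle_trans; [apply lin_nsub; [apply HlTm; lra|apply HKm; lra]|].
      apply Rmult_le_compat_l; [lra|]. pose proof (Htel k 0%nat ltac:(lia)) as Ht'.
      rewrite Hz0 in Ht'. exact Ht'. }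
    assert (Hb : vnorm (vsub (Tm m r (P m (zj k))) (P m (T r (zj k)))) <= B * r) by (apply Hstep; lia || lra).
    assert (Hfin : K * (K * (INR k * eta) * B) + B * r <= e * h).
    { assert (e = K * K * B) by (unfold B; field; lra).
      rewrite H1, Hh'. assert (0 <= INR k * eta) by nra.
      assert (B * r <= K * K * B * r).
      { assert (1 <= K * K) by nra. assert (0 <= B * r) by nra.
        replace (K * K * B * r) with ((K * K) * (B * r)) by ring. nra. }
      nra. }
    lra. }
  set (psi := fun m (sg : R) w => vnorm (vsub (J m (P m w)) w)).
  set (Lc2 := MJ * MP + 1).
  assert (HLc2 : 0 <= Lc2) by (unfold Lc2; nra).
  assert (Hlip2 : forall m sg w w', psi m sg w <= psi m sg w' + Lc2 * vnorm (vsub w w')).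
  { intros m sg w w'. unfold psi. eapply Rle_trans; [apply nlip|]. apply Rplus_le_compat_l.
    pose proof (lin_nsub (J m) MJ (P m w) (P m w') (HlJ m) (HJb m)).
    pose proof (lin_nsub (P m) MP w w' (HlP m) (HPb m)).
    pose proof (vnorm_nonneg _ (vsub w w')). unfold Lc2. nra. }
  assert (U2 : forall e, 0 < e -> exists s0, 0 < s0 /\ exists N, forall m sg s, (N <= m)%nat ->
     0 <= sg <= s0 -> 0 <= s <= H -> psi m sg (T s x) <= e).
  { apply (unif_path (fun s => T s x) 0 H psi Lc2 1); try lra.
    - apply (sg_ucont T K H x HT); auto; lra.
    - intros; apply Hlip2.
    - intros s Hs e He. exists 1. split; [lra|]. destruct (HJP (T s x) e He) as [N HN].
      exists N. intros m sg Hm _. apply HN; exact Hm. }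
  assert (P2 : forall e, 0 < e -> exists N, forall m h, (N <= m)%nat -> 0 < h <= t ->
     vnorm (vsub (vscal (/ h) (vsub (J m (Tm m h (P m x))) (J m (P m x)))) (quot T x h)) <= e).
  { intros e He.
    destruct (Mest (e / (2 * MJ))) as [N1 HN1]. { apply Rdiv_lt_0_compat; lra. }
    assert (Hd2 : 0 < 4 * (MJ * MP + 2)) by nra.
    destruct (gen_lim T D A x HA Hx (e / (4 * (MJ * MP + 2)))) as [d [Hd Hd']].
    { apply Rdiv_lt_0_compat; lra. }
    destruct (HJP (A x) (e / (4 * (MJ * MP + 2)))) as [N3 HN3]. { apply Rdiv_lt_0_compat; lra. }
    destruct (U2 (e * d / 8)) as [s0 [Hs0 [N4 HN4]]]. { nra. }
    exists (Nat.max N1 (Nat.max N3 N4)). intros m h Hm Hh.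
    set (a := J m (Tm m h (P m x))). set (b := J m (P m x)). set (c := T h x).
    set (v := quot T x h).
    set (u' := J m (P m v)).
    assert (Hu' : u' = vscal (/ h) (vsub (J m (P m c)) b)).
    { unfold u', v, quot, b, c. rewrite (lin_scal (P m)), (lin_scal (J m)), (lin_sub (P m)), (lin_sub (J m)) by auto.
      reflexivity. }
    eapply Rle_trans; [apply (nsub_tri _ _ u')|].
    assert (Hpart1 : vnorm (vsub (vscal (/ h) (vsub a b)) u') <= e / 2).
    { rewrite Hu', nsub_scal, vsub_sub, vsub_xx, vsub_0r.
      unfold a, c. eapply Rle_trans.
      apply Rmult_le_compat_l. apply Rabs_pos. apply lin_nsub; [apply HlJ|apply HJb].
      specialize (HN1 m h ltac:(lia) Hh).
      rewrite Rabs_right by (left; apply Rinv_0_lt_compat; lra).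
      apply (Rmult_le_compat_l MJ) in HN1; [|lra].
      replace (MJ * (e / (2 * MJ) * h)) with (e / 2 * h) in HN1 by (field; lra).
      apply (Rmult_le_reg_l h); [lra|]. rewrite <- Rmult_assoc, Rinv_r by lra.
      rewrite Rmult_1_l. lra. }
    assert (Hpart2 : psi m 0 v <= e / 2).
    { destruct (Rlt_dec h d) as [Hhd|Hhd].
      - eapply Rle_trans; [apply (Hlip2 m 0 v (A x))|].
        specialize (Hd' h ltac:(lra)). fold v in Hd'.
        specialize (HN3 m ltac:(lia)). unfold psi. unfold Lc2.
        assert ((MJ * MP + 1) * vnorm (vsub v (A x)) <= (MJ * MP + 1) * (e / (4 * (MJ * MP + 2)))).
        { apply Rmult_le_compat_l; [nra|exact Hd']. }
        assert ((MJ * MP + 2) * (e / (4 * (MJ * MP + 2))) = e / 4) by (field; lra).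
        assert (0 <= e / (4 * (MJ * MP + 2))) by (left; apply Rdiv_lt_0_compat; lra).
        nra.
      - assert (Hv : vsub (J m (P m v)) v = vscal (/ h) (vsub (vsub (J m (P m c)) c) (vsub (J m (P m x)) x))).
        { unfold v, quot, c. rewrite (lin_scal (P m)), (lin_scal (J m)), (lin_sub (P m)), (lin_sub (J m)) by auto.
          rewrite <- vscal_sub, vsub_sub. reflexivity. }
        unfold psi. rewrite Hv, vnorm_scal, Rabs_right by (left; apply Rinv_0_lt_compat; lra).
        pose proof (norm_sub_le _ (vsub (J m (P m c)) c) (vsub (J m (P m x)) x)).
        assert (H1 : psi m 0 (T h x) <= e * d / 8) by (apply HN4; [lia|lra|lra]).
        assert (H2 : psi m 0 (T 0 x) <= e * d / 8) by (apply HN4; [lia|lra|lra]).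
        rewrite (sg_0 T) in H2 by auto. unfold psi in H1, H2. fold c in H1.
        assert (Hn : vnorm (vsub (vsub (J m (P m c)) c) (vsub (J m (P m x)) x)) <= e * d / 4) by lra.
        apply (Rmult_le_reg_l h); [lra|]. rewrite <- Rmult_assoc, Rinv_r by lra. rewrite Rmult_1_l.
        assert (d <= h) by (apply Rnot_lt_le; exact Hhd). nra. }
    unfold psi in Hpart2. fold u' in Hpart2. lra. }
  split.
  - intros e He.
    destruct (P2 (e/2) ltac:(lra)) as [N1 HN1].
    destruct (gen_lim T D A x HA Hx (e/2) ltac:(lra)) as [d [Hd Hd']].
    destruct (INR_archimed d t Hd) as [Nd HNd].
    exists (Nat.max (Nat.max N1 Nd) 1). intros n m Hn HNn HNm.
    assert (Hn1 : 1 <= INR n) by (apply (le_INR 1); exact Hn).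
    assert (Hnd : INR Nd <= INR n) by (apply le_INR; lia).
    assert (Hh : 0 < t / INR n <= t).
    { split. apply Rdiv_lt_0_compat; lra. unfold Rdiv.
      apply (Rmult_le_reg_r (INR n)); [lra|]. rewrite Rmult_assoc, Rinv_l by lra. nra. }
    assert (Hhd : t / INR n < d).
    { apply (Rmult_lt_reg_r (INR n)); [lra|]. unfold Rdiv. rewrite Rmult_assoc, Rinv_l by lra.
      pose proof (Rmult_le_compat_r d _ _ (Rlt_le _ _ Hd) Hnd). nra. }
    eapply Rle_trans; [apply (nsub_tri _ _ (quot T x (t / INR n)))|].
    pose proof (HN1 m (t / INR n) ltac:(lia) Hh). pose proof (Hd' (t / INR n) (conj (proj1 Hh) Hhd)).
    lra.
  - intros e He. destruct (P2 e He) as [N HN]. exists N. intros n m Hn Hm.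
    assert (Hn1 : 1 <= INR n) by (apply (le_INR 1); exact Hn).
    assert (Hh : 0 < t / INR n <= t).
    { split. apply Rdiv_lt_0_compat; lra. unfold Rdiv.
      apply (Rmult_le_reg_r (INR n)); [lra|]. rewrite Rmult_assoc, Rinv_l by lra. nra. }
    apply HN; auto.
Qed.
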